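(* Let $a_{n,1}$ denote the number of matchings of size $n$ with exactly one occurrence of the endhered pattern $21$. Then $a_{1,1}=0$, $a_{2,1}=1$, and for all $n\ge2$, $$a_{n+1,1}=2n\,(a_{n,1}+a_{n-1,1}).$$
   Context: A matching of size $n$ is a set of $n$ arcs $(a,b)$ with $1\le a<b\le 2n$ such that each point of $\{1,\dots,2n\}$ belongs to exactly one arc. An occurrence of the endhered pattern $21$ in a matching $\mu$ is a pair of arcs of $\mu$ of the form $(i+1,j+2),(i+2,j+1)$ (two nested arcs with consecutive starting points and consecutive ending points); the number of occurrences is the number of such pairs. *)

(* Defs.v *)
From mathcomp Require Import all_boot.
Set Implicit Arguments. Unset Strict Implicit. Unset Printing Implicit Defensive.

(* Points 1..2n are encoded as ordinals 'I_(2n): ordinal k stands for point k+1.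
   A matching of size n is a set of arcs (a,b), a < b, such that every point
   lies in exactly one arc. *)
Definition arcs (n : nat) := {set 'I_(n.*2) * 'I_(n.*2)}.

Definition is_matching (n : nat) (M : arcs n) : bool :=
  [forall p in M, (p.1 < p.2)%N] &&
  [forall x : 'I_(n.*2), #|[set p in M | (p.1 == x) || (p.2 == x)]| == 1].

(* has_arc M a b : (a,b) is an arc of M, with a, b given as points in 1..2n *)
Definition has_arc (n : nat) (M : arcs n) (a b : nat) : bool :=
  [exists p in M, ((p.1 : nat).+1 == a) && ((p.2 : nat).+1 == b)].

Definition occ21 (n : nat) (M : arcs n) : nat :=
  #|[set ij : 'I_(n.*2) * 'I_(n.*2) |
      has_arc M (ij.1 : nat).+1 (ij.2 : nat).+2 &&
      has_arc M (ij.1 : nat).+2 (ij.2 : nat).+1]|.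

Definition a_nk (n k : nat) : nat :=
  #|[set M : arcs n | is_matching M && (occ21 M == k)]|.

(* Main.v *)
Require Import Defs.
From mathcomp Require Import all_boot zify.
Set Implicit Arguments. Unset Strict Implicit. Unset Printing Implicit Defensive.

Definition E (p q x : nat) : nat := bump q (bump p x).

Lemma E_lt p q x y : p < q -> (E p q x < E p q y) = (x < y).
Proof. move=> h; rewrite /E /bump; apply/idP/idP; lia. Qed.
Lemma E_inj p q x y : p < q -> E p q x = E p q y -> x = y.
Proof. rewrite /E /bump; lia. Qed.
Lemma E_neqp p q x : p < q -> E p q x <> p.
Proof. rewrite /E /bump; lia. Qed.
Lemma E_neqq p q x : p < q -> E p q x <> q.
Proof. rewrite /E /bump; lia. Qed.
Lemma E_bound p q x K : p < q -> q < K.+2 -> (E p q x < K.+2) = (x < K).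
Proof. rewrite /E /bump => h1 h2; apply/idP/idP; lia. Qed.
Arguments E_neqp {p q} x.
Arguments E_neqq {p q} x.
Arguments E_bound {p q} x {K}.
Lemma E_surj p q z : p < q -> z <> p -> z <> q -> exists x, E p q x = z /\ x <= z.
Proof.
move=> h1 h2 h3; exists (z - (p < z) - (q < z)); rewrite /E /bump; split; lia.
Qed.

Definition arcR K (M : {set 'I_K * 'I_K}) (a b : nat) : bool :=
  [exists x in M, (x.1 == a :> nat) && (x.2 == b :> nat)].

Lemma arcRP K (M : {set 'I_K * 'I_K}) a b :
  reflect (exists2 x, x \in M & (x.1 = a :> nat) /\ (x.2 = b :> nat)) (arcR M a b).
Proof.
apply: (iffP existsP) => [[x /andP[xM /andP[/eqP h1 /eqP h2]]]|[x xM [h1 h2]]].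
  by exists x.
by exists x; rewrite xM h1 h2 !eqxx.
Qed.

Lemma arcR_bound K (M : {set 'I_K * 'I_K}) a b : arcR M a b -> a < K /\ b < K.
Proof. by case/arcRP=> x _ [<- <-]; split. Qed.

Lemma arcR_mem K (M : {set 'I_K * 'I_K}) (x : 'I_K * 'I_K) : arcR M x.1 x.2 = (x \in M).
Proof.
apply/arcRP/idP=> [[y yM [h1 h2]]|xM]; last by exists x.
have -> : x = y by case: x y h1 h2 yM => [x1 x2] [y1 y2] /= /val_inj -> /val_inj ->.
done.
Qed.

Lemma set_arcR K (M M' : {set 'I_K * 'I_K}) :
  (forall a b, arcR M a b = arcR M' a b) -> M = M'.
Proof. by move=> h; apply/setP=> x; rewrite -!arcR_mem h. Qed.

Definition matchN K (M : {set 'I_K * 'I_K}) : Prop :=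
  [/\ (forall a b, arcR M a b -> a < b),
      (forall z, z < K -> exists w, arcR M z w \/ arcR M w z) &
      (forall a b c d, arcR M a b -> arcR M c d ->
          (a = c \/ a = d \/ b = c \/ b = d) -> a = c /\ b = d)].

Definition is_matchingK K (M : {set 'I_K * 'I_K}) : bool :=
  [forall p in M, (p.1 < p.2)%N] &&
  [forall x : 'I_K, #|[set p in M | (p.1 == x) || (p.2 == x)]| == 1].

Lemma is_matchingE n (M : arcs n) : is_matching M = is_matchingK M.
Proof. by []. Qed.

Lemma matchNP K (M : {set 'I_K * 'I_K}) : is_matchingK M <-> matchN M.
Proof.
split.
  case/andP=> /forall_inP ho /forallP hc; split.
  - by move=> a b /arcRP[x xM [<- <-]]; apply: ho.
  - move=> z zK; have := hc (Ordinal zK); case/cards1P=> x hx.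
    have : x \in [set p in M | (p.1 == Ordinal zK) || (p.2 == Ordinal zK)] by rewrite hx set11.
    rewrite inE => /andP[xM /orP[/eqP e|/eqP e]].
      by exists x.2; left; apply/arcRP; exists x => //; rewrite e.
    by exists x.1; right; apply/arcRP; exists x => //; rewrite e.
  - move=> a b c d /arcRP[x xM [ha hb]] /arcRP[y yM [hc' hd]] hs.
    suff e : x = y by rewrite -ha -hb -hc' -hd e.
    have [z hz] : exists z : 'I_K, ((x.1 == z) || (x.2 == z)) && ((y.1 == z) || (y.2 == z)).
      case: hs => [e|[e|[e|e]]].
      + by exists x.1; rewrite eqxx /=; apply/orP; left; apply/eqP/val_inj; rewrite /= hc' -e ha.
      + by exists x.1; rewrite eqxx /=; apply/orP; right; apply/eqP/val_inj; rewrite /= hd -e ha.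
      + by exists x.2; rewrite eqxx orbT /=; apply/orP; left; apply/eqP/val_inj; rewrite /= hc' -e hb.
      + by exists x.2; rewrite eqxx orbT /=; apply/orP; right; apply/eqP/val_inj; rewrite /= hd -e hb.
    case/andP: hz => hx hy.
    have /cards1P[w hw] := hc z.
    have : x \in [set p in M | (p.1 == z) || (p.2 == z)] by rewrite inE xM hx.
    have : y \in [set p in M | (p.1 == z) || (p.2 == z)] by rewrite inE yM hy.
    by rewrite hw !inE => /eqP e1 /eqP e2; rewrite e1 e2.
case=> ho hc hu; apply/andP; split.
  apply/forall_inP=> x xM; apply: ho; apply/arcRP; by exists x.
apply/forallP=> z; apply/cards1P.
have [w [h|h]] := hc z (ltn_ord z); case/arcRP: h => x xM [h1 h2].
- exists x; apply/setP=> y; rewrite !inE; apply/andP/eqP=> [[yM hy]|->]; last first.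
    by rewrite xM; split=> //; apply/orP; left; apply/eqP/val_inj.
  have [e1 e2] : x.1 = y.1 :> nat /\ x.2 = y.2 :> nat.
    apply: (hu x.1 x.2 y.1 y.2); first (by apply/arcRP; exists x); first (by apply/arcRP; exists y).
    move: h1 h2; case/orP: hy => /eqP -> h1 h2; rewrite h1; [left|right; left]; done.
  by case: x y e1 e2 {xM yM h1 h2 hy} => [x1 x2] [y1 y2] /= /val_inj -> /val_inj ->.
- exists x; apply/setP=> y; rewrite !inE; apply/andP/eqP=> [[yM hy]|->]; last first.
    by rewrite xM; split=> //; apply/orP; right; apply/eqP/val_inj.
  have [e1 e2] : x.1 = y.1 :> nat /\ x.2 = y.2 :> nat.
    apply: (hu x.1 x.2 y.1 y.2); first (by apply/arcRP; exists x); first (by apply/arcRP; exists y).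
    move: h1 h2; case/orP: hy => /eqP -> h1 h2; rewrite h2; [right; right; left|right; right; right]; done.
  by case: x y e1 e2 {xM yM h1 h2 hy} => [x1 x2] [y1 y2] /= /val_inj -> /val_inj ->.
Qed.

Definition ins K (M : {set 'I_K * 'I_K}) (p q : nat) : {set 'I_K.+2 * 'I_K.+2} :=
  [set x : 'I_K.+2 * 'I_K.+2 | ((x.1 == p :> nat) && (x.2 == q :> nat)) ||
           [exists y in M, (E p q y.1 == x.1) && (E p q y.2 == x.2)]].

Definition del K (M : {set 'I_K.+2 * 'I_K.+2}) (p q : nat) : {set 'I_K * 'I_K} :=
  [set x : 'I_K * 'I_K | arcR M (E p q x.1) (E p q x.2)].

Lemma arcR_ins K (M : {set 'I_K * 'I_K}) p q a b : p < q -> q < K.+2 ->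
  arcR (ins M p q) a b <->
  (a = p /\ b = q) \/ exists x y, [/\ arcR M x y, a = E p q x & b = E p q y].
Proof.
move=> pq qK; split.
  case/arcRP=> z; rewrite inE => /orP[/andP[/eqP h1 /eqP h2]|/exists_inP[y yM /andP[/eqP h1 /eqP h2]]] [h3 h4].
    by left; rewrite -h3 -h4.
  by right; exists y.1, y.2; split; [apply/arcRP; exists y|rewrite -h3 -h1|rewrite -h4 -h2].
case=> [[-> ->]|[x [y [hxy -> ->]]]].
  have pK : p < K.+2 by apply: ltn_trans qK.
  apply/arcRP; exists (Ordinal pK, Ordinal qK) => //; by rewrite inE !eqxx.
case/arcRP: hxy => z zM [h1 h2].
have h3 : E p q x < K.+2 by rewrite E_bound // -h1.
have h4 : E p q y < K.+2 by rewrite E_bound // -h2.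
apply/arcRP; exists (Ordinal h3, Ordinal h4) => //.
rewrite inE; apply/orP; right; apply/exists_inP; exists z => //=; by rewrite h1 h2 !eqxx.
Qed.

Lemma arcR_del K (M : {set 'I_K.+2 * 'I_K.+2}) p q a b :
  arcR (del M p q) a b <-> [/\ a < K, b < K & arcR M (E p q a) (E p q b)].
Proof.
split.
  by case/arcRP=> z; rewrite inE => hz [<- <-]; split.
case=> aK bK h; apply/arcRP; exists (Ordinal aK, Ordinal bK) => //; by rewrite inE.
Qed.

Lemma matchN_ins K (M : {set 'I_K * 'I_K}) p q : p < q -> q < K.+2 -> matchN M ->
  matchN (ins M p q).
Proof.
move=> pq qK [ho hc hu]; split.
- move=> a b /arcR_ins => /(_ pq qK) [[-> ->] //|[x [y [hxy -> ->]]]].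
  by rewrite E_lt //; apply: ho.
- move=> z zK.
  case: (eqVneq z p) => [->|zp]; first by exists q; left; apply/arcR_ins => //; left.
  case: (eqVneq z q) => [->|zq]; first by exists p; right; apply/arcR_ins => //; left.
  have [x [hx _]] := E_surj pq (elimN eqP zp) (elimN eqP zq).
  have xK : x < K by rewrite -(E_bound x pq qK) hx.
  have [w [h|h]] := hc x xK.
    by exists (E p q w); left; apply/arcR_ins => //; right; exists x, w; split.
  by exists (E p q w); right; apply/arcR_ins => //; right; exists w, x; split.
- move=> a b c d /arcR_ins => /(_ pq qK) h1 /arcR_ins => /(_ pq qK) h2 hs.
  case: h1 h2 hs => [[-> ->]|[x [y [hxy -> ->]]]] [[-> ->]|[x' [y' [hxy' -> ->]]]] //.
  + move=> hs; exfalso; have := E_neqp x' pq; have := E_neqq x' pq; have := E_neqp y' pq; have := E_neqq y' pq; lia.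
  + move=> hs; exfalso; have := E_neqp x pq; have := E_neqq x pq; have := E_neqp y pq; have := E_neqq y pq; lia.
  + move=> hs; have [e1 e2] : x = x' /\ y = y'.
      by apply: hu => //; case: hs => [/(E_inj pq)|[/(E_inj pq)|[/(E_inj pq)|/(E_inj pq)]]]; tauto.
    by rewrite e1 e2.
Qed.

Lemma matchN_del K (M : {set 'I_K.+2 * 'I_K.+2}) p q : matchN M -> arcR M p q ->
  matchN (del M p q).
Proof.
move=> [ho hc hu] hpq; have pq := ho _ _ hpq.
split.
- by move=> a b /arcR_del[_ _ /ho]; rewrite E_lt.
- move=> z zK.
  have ezK : E p q z < K.+2 by rewrite E_bound // (arcR_bound hpq).2.
  have [w [h|h]] := hc _ ezK.
  + have [wp wq] : w <> p /\ w <> q.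
      split=> e; subst w; have := hu _ _ _ _ h hpq; have := E_neqp z pq; have := E_neqq z pq; lia.
    have [x [ex _]] := E_surj pq wp wq; exists x; left; apply/arcR_del; split=> //.
      by rewrite -(E_bound x pq (arcR_bound hpq).2) ex (arcR_bound h).2.
    by rewrite ex.
  + have [wp wq] : w <> p /\ w <> q.
      split=> e; subst w; have := hu _ _ _ _ h hpq; have := E_neqp z pq; have := E_neqq z pq; lia.
    have [x [ex _]] := E_surj pq wp wq; exists x; right; apply/arcR_del; split=> //.
      by rewrite -(E_bound x pq (arcR_bound hpq).2) ex (arcR_bound h).1.
    by rewrite ex.
- move=> a b c d /arcR_del[_ _ h1] /arcR_del[_ _ h2] hs.
  have [e1 e2] := hu _ _ _ _ h1 h2 (ltac:(case: hs => [->|[->|[->|->]]]; tauto)).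
  by split; apply: (E_inj pq).
Qed.

Lemma ins_del K (M : {set 'I_K.+2 * 'I_K.+2}) p q : matchN M -> arcR M p q ->
  ins (del M p q) p q = M.
Proof.
move=> [ho hc hu] hpq; have pq := ho _ _ hpq; have qK := (arcR_bound hpq).2.
apply: set_arcR => a b; apply/idP/idP.
  case/arcR_ins => // [[-> ->] //|[x [y [/arcR_del[_ _ h] -> ->]]] //].
move=> hab; apply/arcR_ins => //.
case: (eqVneq a p) => [ea|ap].
  by left; have := hu _ _ _ _ hab hpq; lia.
case: (eqVneq b q) => [eb|bq].
  by left; have := hu _ _ _ _ hab hpq; lia.
have [bp aq] : b <> p /\ a <> q by split=> e; have := hu _ _ _ _ hab hpq; lia.
have [x [ex _]] := E_surj pq (elimN eqP ap) aq.
have [y [ey _]] := E_surj pq bp (elimN eqP bq).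
right; exists x, y; split => //; apply/arcR_del; rewrite ex ey; split => //.
  by rewrite -(E_bound x pq qK) ex (arcR_bound hab).1.
by rewrite -(E_bound y pq qK) ey (arcR_bound hab).2.
Qed.

Lemma del_ins K (M : {set 'I_K * 'I_K}) p q : p < q -> q < K.+2 ->
  del (ins M p q) p q = M.
Proof.
move=> pq qK; apply: set_arcR => a b; apply/idP/idP.
  case/arcR_del => aK bK /arcR_ins => /(_ pq qK) [[h _]|[x [y [h /(E_inj pq) -> /(E_inj pq) ->]]]] //.
  by have := E_neqp a pq.
move=> h; have [aK bK] := arcR_bound h; apply/arcR_del; split=> //.
by apply/arcR_ins => //; right; exists a, b.
Qed.

Definition occN K (M : {set 'I_K * 'I_K}) (i j : nat) : bool :=
  arcR M i j.+1 && arcR M i.+1 j.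

Definition occS K (M : {set 'I_K * 'I_K}) := [set ij : 'I_K * 'I_K | occN M ij.1 ij.2].

Lemma pair_ordE K (x y : 'I_K * 'I_K) : x.1 = y.1 :> nat -> x.2 = y.2 :> nat -> x = y.
Proof. by case: x y => [a b] [c d] /= /val_inj -> /val_inj ->. Qed.

Lemma occE n (M : arcs n) : occ21 M = #|occS M|.
Proof. by []. Qed.

Lemma occN_bound K (M : {set 'I_K * 'I_K}) u v : occN M u v -> u < K /\ v < K.
Proof. by case/andP=> /arcR_bound[h _] /arcR_bound[_ h']. Qed.

Lemma occS_mem K (M : {set 'I_K * 'I_K}) u v : occN M u v ->
  exists ij, ij \in occS M /\ ij.1 = u :> nat /\ ij.2 = v :> nat.
Proof.
move=> h; have [uK vK] := occN_bound h.
by exists (Ordinal uK, Ordinal vK); rewrite inE.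
Qed.

Lemma occ_eq0 K (M : {set 'I_K * 'I_K}) :
  (#|occS M| == 0) <-> (forall u v, ~~ occN M u v).
Proof.
rewrite cards_eq0; split.
  move=> /eqP h u v; apply/negP=> /occS_mem [ij [hij _]].
  by rewrite h inE in hij.
move=> h; apply/eqP/setP=> ij; rewrite !inE; apply/negP=> hij.
by have := h ij.1 ij.2; rewrite hij.
Qed.

Lemma occ_eq1 K (M : {set 'I_K * 'I_K}) :
  (#|occS M| == 1) <-> exists u v, occN M u v /\ forall u' v', occN M u' v' -> u' = u /\ v' = v.
Proof.
split.
  case/cards1P=> ij hij.
  have : ij \in occS M by rewrite hij set11.
  rewrite inE => hN; exists ij.1, ij.2; split=> // u' v' /occS_mem [ij' [h' [<- <-]]].
  by move: h'; rewrite hij inE => /eqP ->.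
case=> u [v [huv hu]]; apply/cards1P.
have [ij [hij [e1 e2]]] := occS_mem huv.
exists ij; apply/setP=> ij'; rewrite inE; apply/idP/eqP => [|->//].
rewrite inE => /hu [h1 h2].
by apply: pair_ordE; [rewrite h1 e1|rewrite h2 e2].
Qed.

Lemma occ_le1 K (M : {set 'I_K * 'I_K}) :
  (forall u v u' v', occN M u v -> occN M u' v' -> u = u' /\ v = v') -> #|occS M| <= 1.
Proof.
move=> h; apply/card_le1_eqP => x y; rewrite !inE => hx hy.
have [e1 e2] := h _ _ _ _ hx hy.
exact: pair_ordE.
Qed.

Lemma E_step p q x x' : p < q -> E p q x' = (E p q x).+1 -> x' = x.+1.
Proof. rewrite /E /bump; lia. Qed.

Lemma occ_ins_char K (M : {set 'I_K * 'I_K}) p q u v : p < q -> q < K.+2 ->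
  occN (ins M p q) u v ->
  [\/ [/\ u = p, v.+1 = q & arcR (ins M p q) p.+1 v],
      [/\ u.+1 = p, v = q & arcR (ins M p q) u v.+1] |
      exists x y, [/\ occN M x y, u = E p q x, v = E p q y,
                     E p q x.+1 = (E p q x).+1 & E p q y.+1 = (E p q y).+1]].
Proof.
move=> pq qK /andP[h1 h2].
have h1' := h1; have h2' := h2.
move/arcR_ins: h1 => /(_ pq qK) [[e1 e2]|[x [y' [hx e1 e2]]]].
  by constructor 1; split => //; rewrite e1 in h2'.
move/arcR_ins: h2 => /(_ pq qK) [[e3 e4]|[x' [y [hy e3 e4]]]].
  by apply: Or32; split.
have ex : x' = x.+1 by apply: (E_step pq); rewrite -e3 e1.
have ey : y' = y.+1 by apply: (E_step pq); rewrite -e2 e4.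
subst x' y'; apply: Or33; exists x, y; split => //; first by rewrite /occN hx hy.
  by rewrite -e3 e1.
by rewrite -e2 e4.
Qed.

Lemma occ_ins_old K (M : {set 'I_K * 'I_K}) p q x y : p < q -> q < K.+2 ->
  occN M x y -> E p q x.+1 = (E p q x).+1 -> E p q y.+1 = (E p q y).+1 ->
  occN (ins M p q) (E p q x) (E p q y).
Proof.
move=> pq qK /andP[h1 h2] ex ey; apply/andP; split; apply/arcR_ins => //; right.
  by exists x, y.+1; split.
by exists x.+1, y; split.
Qed.

Lemma occ_last K (M : {set 'I_K * 'I_K}) p : matchN M -> p < K.+1 ->
  (exists u v, occN (ins M p K.+1) u v) <->
  (exists x y, [/\ occN M x y, x.+1 <> p & y.+1 <> p]) \/ arcR M p K.-1.
Proof.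
move=> [ho hc hu] pK; have qK : K.+1 < K.+2 by [].
split.
  case=> u [v /(occ_ins_char pK qK)] [[e1 e2 h]|[e1 e2 h]|[x [y [hxy e1 e2 ex ey]]]].
  - right; move/arcR_ins: h => /(_ pK qK) [[h _]|[x [y [hxy ex ey]]]]; first lia.
    have [xK yK] := arcR_bound hxy.
    have e3 : x = p by move: ex; rewrite /E /bump; lia.
    have e4 : y = K.-1 by move: ey e2; rewrite /E /bump; lia.
    by rewrite -e3 -e4.
  - by have := arcR_bound h; lia.
  - left; exists x, y; split => //.
      move: (occN_bound hxy) (hxy) => [xK yK] /andP[_ /arcR_bound [h1 h2]].
      move: ex; rewrite /E /bump; lia.
    move: (occN_bound hxy) (hxy) => [xK yK] /andP[/arcR_bound [h1 h2] _].
    move: ey; rewrite /E /bump; lia.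
case=> [[x [y [hxy hx hy]]]|h].
  exists (E p K.+1 x), (E p K.+1 y); apply: occ_ins_old => //.
    move: (occN_bound hxy) (hxy) => [xK yK] /andP[_ /arcR_bound [h1 h2]].
    rewrite /E /bump; lia.
  move: (occN_bound hxy) (hxy) => [xK yK] /andP[/arcR_bound [h1 h2] _].
  rewrite /E /bump; lia.
have [pK' K1] := arcR_bound h; have := ho _ _ h => pk1.
exists p, K; apply/andP; split; apply/arcR_ins => //; first by left.
right; exists p, K.-1; split => //; rewrite /E /bump; lia.
Qed.

Lemma card_ltm m (A : {set 'I_m.+1}) : (forall p : 'I_m.+1, (p \in A) = (p < m)) -> #|A| = m.
Proof.
move=> h; have -> : A = [set~ ord_max].
  apply/setP=> p; rewrite h !inE; apply/idP/idP.
    by move=> hp; apply/eqP=> e; rewrite e /= ltnn in hp.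
  move=> hp; have := ltn_ord p; rewrite ltnS leq_eqVlt => /orP[/eqP e|//].
  by exfalso; move/eqP: hp; apply; apply: val_inj.
by rewrite cardsC1 card_ord.
Qed.

Lemma card_ltm_neq m c (A : {set 'I_m.+1}) : c < m ->
  (forall p : 'I_m.+1, (p \in A) = (p < m) && (p != c :> nat)) -> #|A| = m.-1.
Proof.
move=> cm h.
have cm1 : c < m.+1 by apply: ltn_trans cm _.
have e := cardsD1 (Ordinal cm1) [set p : 'I_m.+1 | p < m].
rewrite (@card_ltm m [set p : 'I_m.+1 | p < m]) in e; last by move=> p; rewrite inE.
rewrite inE /= cm in e.
suff -> : A = [set p : 'I_m.+1 | p < m] :\ Ordinal cm1 by move: e; move: (#|_ :\ _|) => k; lia.
apply/setP=> p; rewrite h !inE andbC.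
by congr (_ && _); apply/negb_inj; rewrite !negbK; apply/eqP/eqP=> [->|/val_inj] //.
Qed.

Lemma card_two m a b (A : {set 'I_m}) : a < m -> b < m -> a != b ->
  (forall p : 'I_m, (p \in A) = (p == a :> nat) || (p == b :> nat)) -> #|A| = 2.
Proof.
move=> am bm ab h; have -> : A = [set Ordinal am; Ordinal bm].
  by apply/setP=> p; rewrite h !inE.
by rewrite cards2 -(inj_eq val_inj) /= ab.
Qed.

Lemma cnt_last K (M : {set 'I_K * 'I_K}) : matchN M ->
  #|[set p : 'I_K.+2 | (p < K.+1) && (#|occS (ins M p K.+1)| == 0)]| =
  if #|occS M| == 0 then (if K is 0 then 1 else K)
  else if #|occS M| == 1 then 2 else 0.
Proof.
move=> hM; have [ho hc hu] := hM.
have key : forall p : 'I_K.+2, p < K.+1 ->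
   (#|occS (ins M p K.+1)| == 0) =
   ~~ [|| [exists xy : 'I_K * 'I_K, [&& occN M xy.1 xy.2, xy.1.+1 != p & xy.2.+1 != p]]
        | arcR M p K.-1].
  move=> p pK; apply/idP/idP.
    move/occ_eq0 => h; apply/negP => h'; suff : exists u v, occN (ins M p K.+1) u v.
      by case=> u [v]; apply/negP; apply: h.
    apply/(occ_last hM pK); case/orP: h' => [/existsP[xy /and3P[h1 /eqP h2 /eqP h3]]|h'].
      by left; exists xy.1, xy.2.
    by right.
  move=> h; apply/occ_eq0 => u v; apply/negP => huv.
  have : (exists x y, [/\ occN M x y, x.+1 <> p & y.+1 <> p]) \/ arcR M p K.-1.
    by apply/(occ_last hM pK); exists u, v.
  case=> [[x [y [hxy hx hy]]]|h'].
    have [ij [hij [e1 e2]]] := occS_mem hxy.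
    move/negP: h; apply; apply/orP; left; apply/existsP; exists ij.
    by rewrite e1 e2 hxy /=; apply/andP; split; apply/eqP; [apply: hx|apply: hy].
  by move/negP: h; apply; rewrite h' orbT.
case: ifP => [/occ_eq0 h0|/negbT h0].
  case: K M hM ho hc hu h0 key => [|k] M hM ho hc hu h0 key.
    apply: card_ltm => p; rewrite inE; case: ltnP => //= pK; rewrite key //.
    apply/negP => /orP[/existsP[xy]|/arcR_bound[_ //]].
    by case: xy => [[]].
  have [c hcK] : exists c, arcR M c k.
    have [w [h|h]] := hc k (ltnSn k); last by exists w.
    by have := ho _ _ h; have := arcR_bound h; lia.
  apply: (@card_ltm_neq k.+2 c).
    by have := arcR_bound hcK; lia.
  move=> p; rewrite inE; case: ltnP => //= pK; rewrite key //=.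
  apply/idP/idP.
    move/norP=> [_ h]; apply/eqP => e; by rewrite e hcK in h.
  move=> hpc; apply/norP; split.
    apply/negP=> /existsP[xy /and3P[h _ _]]; by have := h0 xy.1 xy.2; rewrite h.
  apply/negP => h; have := hu _ _ _ _ h hcK; move/eqP: hpc; lia.
case: ifP => [/occ_eq1 [x0 [y0 [h01 huq]]]|/negbT h1].
  have [x0K y0K] := occN_bound h01.
  have [hA hB] : arcR M x0 y0.+1 /\ arcR M x0.+1 y0 by apply/andP.
  have := ho _ _ hB => lt0.
  apply: (@card_two K.+2 x0.+1 y0.+1); try lia.
  move=> p; rewrite inE; apply/idP/idP.
    case/andP=> pK; rewrite key // => /norP[/existsPn /(_ (Ordinal x0K, Ordinal y0K))] /=.
    by rewrite h01 /= negb_and !negbK => /orP[/eqP e|/eqP e] _; rewrite -e eqxx ?orbT.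
  move=> hp; have pK : p < K.+1 by move: hp; lia.
  rewrite pK /= key //; apply/norP; split.
    apply/existsPn => xy; apply/negP => /and3P[hxy hx hy].
    have [e1 e2] := huq _ _ hxy; move: hx hy hp; rewrite e1 e2; lia.
  apply/negP => h; case/orP: hp => /eqP e; rewrite e in h.
    have := hu _ _ _ _ h hB; have := arcR_bound hA; lia.
  have := hu _ _ _ _ h hA; lia.
apply/eqP; rewrite cards_eq0; apply/eqP/setP => p; rewrite !inE.
apply/negP => /andP[pK]; rewrite key // => /norP[/existsPn hall _].
have : #|occS M| <= 1.
  apply: occ_le1 => x y x' y' hxy hxy'.
  have [ij [_ [e1 e2]]] := occS_mem hxy.
  have [ij' [_ [e1' e2']]] := occS_mem hxy'.
  have := hall ij; have := hall ij'; rewrite e1 e2 e1' e2' hxy hxy' /= !negb_and !negbK.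
  move: hxy hxy' => /andP[a1 a2] /andP[a3 a4].
  have := ho _ _ a1; have := ho _ _ a2; have := ho _ _ a3; have := ho _ _ a4.
  move=> l1 l2 l3 l4 /orP[/eqP f1|/eqP f1] /orP[/eqP f2|/eqP f2].
  - have := hu _ _ _ _ a1 a3; lia.
  - have := hu _ _ _ _ a2 a3; lia.
  - have := hu _ _ _ _ a1 a4; lia.
  - have := hu _ _ _ _ a2 a4; lia.
by move: h0 h1; case: #|occS M| => [|[|]].
Qed.

Lemma card_del K (M : {set 'I_K.+2 * 'I_K.+2}) a b : matchN M -> arcR M a b ->
  #|M| = #|del M a b| + 1.
Proof.
move=> hM hab; have [ho hc hu] := hM; have ab := ho _ _ hab.
have bK := (arcR_bound hab).2.
case/arcRP: (hab) => z0 z0M [e1 e2].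
pose f (x : 'I_K * 'I_K) : 'I_K.+2 * 'I_K.+2 := (inord (E a b x.1), inord (E a b x.2)).
have Eb : forall x : 'I_K, E a b x < K.+2 by move=> x; rewrite E_bound.
have feq : M :\ z0 = f @: del M a b.
  apply/setP => z; rewrite !inE; apply/andP/imsetP.
    case=> zn zM.
    have hz : arcR M z.1 z.2 by rewrite arcR_mem.
    have nz : ~ ((z.1 : nat) = a \/ (z.1 : nat) = b \/ (z.2 : nat) = a \/ (z.2 : nat) = b).
      move=> hs; have [f1 f2] := hu _ _ _ _ hz hab hs.
      by move/eqP: zn; apply; apply: pair_ordE; [rewrite f1 e1|rewrite f2 e2].
    have [x1 [ex1 _]] := E_surj ab (fun e => nz (or_introl e)) (fun e => nz (or_intror (or_introl e))).
    have [x2 [ex2 _]] := E_surj ab (fun e => nz (or_intror (or_intror (or_introl e))))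
                                  (fun e => nz (or_intror (or_intror (or_intror e)))).
    have x1K : x1 < K by rewrite -(E_bound x1 ab bK) ex1.
    have x2K : x2 < K by rewrite -(E_bound x2 ab bK) ex2.
    exists (Ordinal x1K, Ordinal x2K); first by rewrite inE /= ex1 ex2.
    by apply: pair_ordE; rewrite /= inordK ?Eb // ?ex1 ?ex2.
  case=> x; rewrite inE => hx ->.
  have hf : f x \in M by rewrite -arcR_mem /= !inordK ?Eb.
  split=> //; apply/eqP => e; have : (f x).1 = z0.1 :> nat by rewrite e.
  by rewrite /= inordK ?Eb // e1; apply: E_neqp.
have finj : {in del M a b &, injective f}.
  move=> x y _ _ e; have e1' : (f x).1 = (f y).1 :> nat by rewrite e.
  have e2' : (f x).2 = (f y).2 :> nat by rewrite e.
  rewrite /= !inordK ?Eb // in e1' e2'.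
  by apply: pair_ordE; apply: (E_inj ab).
by rewrite (cardsD1 z0) z0M feq (card_in_imset finj) addnC.
Qed.

Lemma card_matching n (M : arcs n) : matchN M -> #|M| = n.
Proof.
elim: n M => [|n IH] M hM.
  apply/eqP; rewrite -leqn0; apply: leq_trans (max_card _) _.
  by rewrite card_prod card_ord.
have [ho hc hu] := hM.
have [w hw] := hc 0 (ltn0Sn _).
have [a [b hab]] : exists a b, arcR M a b by case: hw => h; do 2 eexists; exact: h.
rewrite (card_del hM hab) (IH (del M a b)) ?addn1 //.
exact: matchN_del.
Qed.

Lemma sum_card_pairs (A B : finType) (P : pred A) (Q : A -> pred B) :
  #|[set x : A * B | P x.1 && Q x.1 x.2]| = \sum_(a | P a) #|[set b | Q a b]|.
Proof.
rewrite -sum1_card (eq_bigl (fun x : A * B => P x.1 && Q x.1 x.2)); last by move=> x; rewrite inE.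
rewrite -(pair_big_dep P Q (fun _ _ => 1)); apply: eq_bigr => a _.
by rewrite -sum1_card; apply: eq_bigl => b; rewrite inE.
Qed.

Lemma F2 n : a_nk n.+1 0 = \sum_(M : arcs n | is_matching M)
  #|[set p : 'I_(n.*2.+2) | (p < n.*2.+1) && (#|occS (ins M p n.*2.+1)| == 0)]|.
Proof.
rewrite -(sum_card_pairs (fun M : arcs n => is_matching M)
   (fun M (p : 'I_(n.*2.+2)) => (p < n.*2.+1) && (#|occS (ins M p n.*2.+1)| == 0))).
set S := [set x : arcs n * 'I_(n.*2.+2) | _].
pose f (x : arcs n * 'I_(n.*2.+2)) : arcs n.+1 := ins x.1 x.2 n.*2.+1.
have qK : n.*2.+1 < n.*2.+2 by [].
have finj : {in S &, injective f}.
  move=> x y; rewrite !inE => /andP[_ /andP[xK _]] /andP[_ /andP[yK _]] e.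
  have h : arcR (f x) x.2 n.*2.+1 by apply/arcR_ins => //; left.
  rewrite e in h; case/arcR_ins: h => // [[e1 _]|[u [v [_ _ ev]]]]; last first.
    by exfalso; apply: (E_neqq v yK); rewrite -ev.
  have e2 : x.2 = y.2 by apply: val_inj.
  have e3 : x.1 = y.1.
    move: e; rewrite /f e2 => e.
    by rewrite -(@del_ins _ x.1 _ _ yK qK) e del_ins.
  by case: x y e2 e3 {xK yK e1 e} => [x1 x2] [y1 y2] /= -> ->.
rewrite /a_nk -(card_in_imset finj); apply: eq_card => M. rewrite inE.
apply/andP/imsetP.
  case=> /matchNP hM /eqP h0; have [ho hc hu] := hM.
  have [w hw] := hc n.*2.+1 qK.
  have hw' : arcR M w n.*2.+1.
    case: hw => // h; have := ho _ _ h; have := arcR_bound h; lia.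
  case/arcRP: (hw') => z zM [e1 e2].
  have wK : z.1 < n.*2.+1 by rewrite e1; apply: ho hw'.
  exists (del M w n.*2.+1, z.1).
    have h0' : #|occS M| = 0 := h0.
    rewrite inE /= wK /= e1 (ins_del hM hw') h0' andbT.
    by apply/matchNP; apply: matchN_del.
  by rewrite /f /= e1 (ins_del hM hw').
case=> x; rewrite inE => /andP[/matchNP hM /andP[xK h0]] ->.
split; last by rewrite occE.
by apply/matchNP; apply: matchN_ins.
Qed.

Lemma a_nk_sum n k : a_nk n k = \sum_(M : arcs n | is_matching M) (occ21 M == k : nat).
Proof.
rewrite /a_nk -sum1_card (eq_bigl (fun M : arcs n => is_matching M && (occ21 M == k))); last first.
  by move=> M; rewrite inE.
by rewrite big_mkcondr; apply: eq_bigr => M _; case: (occ21 M == k).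
Qed.

Lemma sum_split n (g : arcs n -> nat) c0 :
  (forall M, is_matching M -> g M = if occ21 M == 0 then c0 else if occ21 M == 1 then 2 else 0) ->
  \sum_(M : arcs n | is_matching M) g M = c0 * a_nk n 0 + 2 * a_nk n 1.
Proof.
move=> hg; rewrite !a_nk_sum !big_distrr -big_split /=.
apply: eq_bigr => M hM; rewrite hg //.
by case: (occ21 M) => [|[|k]] /=; rewrite ?muln0 ?muln1 ?addn0.
Qed.

Lemma F2' n : 0 < n -> a_nk n.+1 0 = n.*2 * a_nk n 0 + 2 * a_nk n 1.
Proof.
move=> n0; rewrite F2; apply: sum_split => M /matchNP hM.
rewrite cnt_last //.
by case: n n0 M hM => [//|n] _ M hM.
Qed.

Lemma a10 : a_nk 1 0 = 1.
Proof.
rewrite F2 (bigD1 set0) /=; last first.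
  apply/matchNP; split.
  - by move=> a b /arcRP [[[]]].
  - by [].
  - by move=> a b c d /arcRP [[[]]].
rewrite big1 ?addn0.
  rewrite cnt_last //.
    by have -> : #|occS (set0 : arcs 0)| = 0 by apply/eqP; rewrite cards_eq0; apply/eqP/setP=> [[[]]].
  split.
  - by move=> a b /arcRP [[[]]].
  - by [].
  - by move=> a b c d /arcRP [[[]]].
move=> M /andP[_ hM]; exfalso; move/negP: hM; apply.
by apply/eqP/setP => [[[]]].
Qed.

Lemma occ_ins_arc K (M : {set 'I_K * 'I_K}) a b : matchN M ->
  (forall u v, ~~ occN M u v) -> arcR M a b ->
  forall u v, occN (ins M a.+1 b.+1) u v <-> (u = a /\ v = b.+1).
Proof.
move=> [ho hc hu] h0 hab; have ab := ho _ _ hab; have [aK bK] := arcR_bound hab.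
have pq : a.+1 < b.+1 by lia. have qK : b.+1 < K.+2 by lia.
move=> u v; split; last first.
  case=> -> ->; apply/andP; split; apply/arcR_ins => //; last by left.
  by right; exists a, b; split => //; rewrite /E /bump; lia.
case/(occ_ins_char pq qK) => [[e1 e2 h]|[e1 e2 h]|[x [y [hxy _ _ _ _]]]].
- exfalso; case/arcR_ins: h => // [[h _]|[x [y [hxy ex ey]]]]; first lia.
  have ex' : x = a.+1 by move: ex; rewrite /E /bump; lia.
  have ey' : y = b.-1 by move: ey e2; rewrite /E /bump; lia.
  have := h0 a b.-1; rewrite /occN prednK; last by lia.
  by rewrite hab -ex' -ey' hxy.
- by split; lia.
- by have := h0 x y; rewrite hxy.
Qed.

Lemma F1 n : a_nk n.+1 1 = n * a_nk n 0.
Proof.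
have -> : n * a_nk n 0 = \sum_(M : arcs n | is_matching M)
     #|[set pq : 'I_n.*2 * 'I_n.*2 | (occ21 M == 0) && (pq \in M)]|.
  rewrite a_nk_sum big_distrr /=; apply: eq_bigr => M /matchNP hM.
  case: (occ21 M == 0) => /=; last first.
    by rewrite muln0; apply/esym/eqP; rewrite cards_eq0; apply/eqP/setP => x; rewrite !inE.
  rewrite muln1; transitivity #|M|; first by rewrite card_matching. apply: eq_card => x; by rewrite inE.
rewrite -(sum_card_pairs (fun M : arcs n => is_matching M)
   (fun M (pq : 'I_n.*2 * 'I_n.*2) => (occ21 M == 0) && (pq \in M))).
set T := [set x : arcs n * ('I_n.*2 * 'I_n.*2) | _].
pose f (x : arcs n * ('I_n.*2 * 'I_n.*2)) : arcs n.+1 := ins x.1 (x.2.1 : nat).+1 (x.2.2 : nat).+1.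
have fT : forall x, x \in T -> forall u v, occN (f x) u v <-> (u = x.2.1 /\ v = (x.2.2 : nat).+1).
  move=> x; rewrite inE => /andP[/matchNP hM /andP[/eqP h0 hx]].
  apply: occ_ins_arc => //; last by rewrite arcR_mem.
  by apply/occ_eq0; rewrite -occE h0.
have finj : {in T &, injective f}.
  move=> [M1 [a1 b1]] [M2 [a2 b2]] hx hy e.
  have h1 : occN (f (M2, (a2, b2))) a1 b1.+1 by rewrite -e; apply/(fT _ hx).
  have [e1 e2] := (fT _ hy _ _).1 h1.
  have e3 : a1 = a2 by apply: val_inj.
  have e3' : b1 = b2 by apply: val_inj; case: e2.
  subst a2 b2; congr (_, _).
  have [pq qK] : (a1 : nat).+1 < (b1 : nat).+1 /\ (b1 : nat).+1 < n.*2.+2.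
    move: hx; rewrite inE => /andP[/matchNP [ho _ _] /andP[_ hx]].
    by rewrite -arcR_mem /= in hx; have := ho _ _ hx; have := ltn_ord b1; lia.
  have := congr1 (fun X => del X (a1 : nat).+1 (b1 : nat).+1) e.
  by rewrite /= !del_ins.
rewrite /a_nk -(card_in_imset finj); apply: eq_card => M; rewrite inE.
apply/andP/imsetP; last first.
  case=> x hx ->; split.
    move: hx; case: x => [M1 [a1 b1]]; rewrite inE => /andP[/matchNP hM /andP[_ hx]].
    rewrite -arcR_mem /= in hx; have [ho _ _] := hM; have := ho _ _ hx => ab.
    have := ltn_ord b1 => bK.
    have pq : (a1 : nat).+1 < (b1 : nat).+1 by lia. have qK : (b1 : nat).+1 < n.*2.+2 by lia.
    by apply/matchNP; exact: (@matchN_ins n.*2 M1 _ _ pq qK hM).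
  rewrite occE; apply/occ_eq1; exists x.2.1, (x.2.2 : nat).+1; split.
    by apply/(fT x hx).
  by move=> u v /(fT x hx).
case=> /matchNP hM /eqP h1; have [ho hc hu] := hM.
have [i [j [hij huq]]] : exists u v, occN M u v /\ forall u' v', occN M u' v' -> u' = u /\ v' = v.
  by apply/occ_eq1; rewrite -occE h1.
have [hA hB] : arcR M i j.+1 /\ arcR M i.+1 j by apply/andP.
have ij := ho _ _ hB; have [_ jK] := arcR_bound hA.
have hM' := matchN_del hM hB.
have hz : arcR (del M i.+1 j) i j.-1.
  apply/(@arcR_del n.*2); split; try lia.
  have -> : E i.+1 j i = i by rewrite /E /bump; lia.
  by have -> : E i.+1 j j.-1 = j.+1 by rewrite /E /bump; lia.
case/arcRP: (hz) => z zM' [ez1 ez2].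
exists (del M i.+1 j, z); last first.
  rewrite /f /= ez1 ez2 prednK; last by lia.
  by rewrite (ins_del hM hB).
rewrite inE /= zM' andbT; apply/andP; split; first by apply/matchNP.
rewrite occE; apply/occ_eq0 => x y; apply/negP.
move=> /andP[/(@arcR_del n.*2) [_ _ a1] /(@arcR_del n.*2) [_ _ a2]].
have pq : i.+1 < j by [].
have := ho _ _ a2; rewrite E_lt // => xy.
have Ebad : forall u v, arcR M (E i.+1 j u.+1) (E i.+1 j v) -> u = i -> v = j.-2 -> u.+1 < v -> False.
  move=> u v h eu ev uv.
  have e1 : E i.+1 j u.+1 = i.+2 by rewrite /E /bump; lia.
  have e2 : E i.+1 j v = j.-1 by rewrite /E /bump; lia.
  rewrite e1 e2 in h.
  have := huq i.+1 j.-1; rewrite /occN prednK ?hB ?h; last by lia.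
  by move=> /(_ isT); lia.
case: (eqVneq (E i.+1 j x.+1) (E i.+1 j x).+1) => hX.
  case: (eqVneq (E i.+1 j y.+1) (E i.+1 j y).+1) => hY.
    have := huq (E i.+1 j x) (E i.+1 j y); rewrite /occN -hY -hX a1 a2 => /(_ isT) [_ eY].
    exact: (E_neqq y pq eY).
  have : y = i \/ y = j.-2 by move/eqP: hY; rewrite /E /bump; lia.
  case=> ey.
    have e1 : E i.+1 j y = i by rewrite /E /bump; lia.
    rewrite e1 in a2; have := hu _ _ _ _ a2 hA; lia.
  have e1 : E i.+1 j y.+1 = j.+1 by rewrite /E /bump; lia.
  rewrite e1 in a1; have := hu _ _ _ _ a1 hA (ltac:(by right; right; right)) => -[ex _].
  have ex' : x = i by move: ex; rewrite /E /bump; lia.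
  exact: (Ebad x y a2 ex' ey xy).
have : x = i \/ x = j.-2 by move/eqP: hX; rewrite /E /bump; lia.
case=> ex.
  have e1 : E i.+1 j x = i by rewrite /E /bump; lia.
  rewrite e1 in a1; have := hu _ _ _ _ a1 hA (or_introl erefl) => -[_ ey].
  have ey' : y = j.-2 by move: ey; rewrite /E /bump; lia.
  exact: (Ebad x y a2 ex ey' xy).
have e1 : E i.+1 j x.+1 = j.+1 by rewrite /E /bump; lia.
rewrite e1 in a2; have := hu _ _ _ _ hA a2; lia.
Qed.

Theorem corollary3 :
  a_nk 1 1 = 0 /\ a_nk 2 1 = 1 /\
  (forall n : nat, (2 <= n)%N -> a_nk n.+1 1 = 2 * n * (a_nk n 1 + a_nk n.-1 1)).
Proof.
split; first by rewrite F1.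
split; first by rewrite F1 a10.
case=> [//|[//|k]] _.
rewrite (F1 k.+2) (F2' (ltn0Sn k)) (F1 k.+1) /=.
move: (a_nk k.+1 0) (a_nk k.+1 1) => A B.
rewrite -muln2; nia.
Qed.
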